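(* Let $\mathcal{V}$ be a finite set of nodes, $\mathcal{F}$ a finite set of flows, each flow $f$ with rate $\lambda_f>0$ and path node set $\mathcal{V}_f\subseteq\mathcal{V}$, and each node $v$ with capacity $c_v>0$. For $\mathcal{U}\subseteq\mathcal{V}$ let $R_3(\mathcal{U})$ be the optimal value of $$\max \sum_{f\in\mathcal{F}}\sum_{v\in\mathcal{V}_f\cap\mathcal{U}}\lambda_f^v$$ over nonnegative $(\lambda_f^v)_{f\in\mathcal{F},v\in\mathcal{V}}$ subject to $\sum_{f\in\mathcal{F}}\lambda_f^v\le c_v$ for all $v\in\mathcal{U}$, $\lambda_f^v=0$ for all $f$ and all $v\notin\mathcal{U}$, and $\sum_{v\in\mathcal{U}}\lambda_f^v\le\lambda_f$ for all $f\in\mathcal{F}$. Then the set function $R_3:2^{\mathcal{V}}\to\mathbb{R}$ is monotonically nondecreasing and submodular.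
   Context: A set function $H:2^{\mathcal{V}}\to\mathbb{R}$ is submodular if $H(\mathcal{V}_1\cup\{v\})-H(\mathcal{V}_1)\ge H(\mathcal{V}_2\cup\{v\})-H(\mathcal{V}_2)$ for all $\mathcal{V}_1\subseteq\mathcal{V}_2\subseteq\mathcal{V}$ and $v\in\mathcal{V}\setminus\mathcal{V}_2$. *)

(* Defs.v *)
From HB Require Import structures.
From mathcomp Require Import all_boot all_order all_algebra.
From mathcomp Require Import boolp classical_sets reals.
Set Implicit Arguments. Unset Strict Implicit. Unset Printing Implicit Defensive.
Import Order.TTheory GRing.Theory Num.Theory.
Local Open Scope ring_scope.
Local Open Scope classical_set_scope.

Section LP.
Variables (R : realType) (V F : finType).
Variables (rate : F -> R) (path : F -> {set V}) (cap : V -> R).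

Definition feasible3 (U : {set V}) (lam : F -> V -> R) : Prop :=
  [/\ (forall f v, 0 <= lam f v),
      (forall v, v \in U -> \sum_(f : F) lam f v <= cap v),
      (forall f v, v \notin U -> lam f v = 0) &
      (forall f, \sum_(v in U) lam f v <= rate f)].

Definition obj3 (U : {set V}) (lam : F -> V -> R) : R :=
  \sum_(f : F) \sum_(v in path f :&: U) lam f v.

Definition R3 (U : {set V}) : R :=
  sup [set x | exists lam, feasible3 U lam /\ x = obj3 U lam].
End LP.

Definition monotone_setfun (R : realType) (V : finType) (H : {set V} -> R) : Prop :=
  forall U1 U2 : {set V}, U1 \subset U2 -> H U1 <= H U2.

Definition submodular (R : realType) (V : finType) (H : {set V} -> R) : Prop :=
  forall (U1 U2 : {set V}) (v : V), U1 \subset U2 -> v \notin U2 ->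
    H (v |: U1) - H U1 >= H (v |: U2) - H U2.

(* Main.v *)
Require Import Defs.
From HB Require Import structures.
From mathcomp Require Import all_boot all_order all_algebra.
From mathcomp Require Import boolp classical_sets reals.
From mathcomp Require Import lra zify.
Set Implicit Arguments. Unset Strict Implicit. Unset Printing Implicit Defensive.
Import Order.TTheory GRing.Theory Num.Theory.
Local Open Scope ring_scope.
Section Gale.
Variables (R : realType) (F V : finType) (adj : F -> V -> bool).

Implicit Types (S T Fs : {set F}) (Ws : {set V}).

Definition NB (S : {set F}) : {set V} := [set v | [exists f in S, adj f v]].

Lemma in_NB f S v : f \in S -> adj f v -> v \in NB S.
Proof. by move=> fS a; rewrite inE; apply/existsP; exists f; rewrite fS. Qed.

Lemma NB_sub S T : S \subset T -> NB S \subset NB T.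
Proof.
move=> ST; apply/fintype.subsetP => v; rewrite !inE => /existsP [f /andP [fS a]].
by apply/existsP; exists f; rewrite a (fintype.subsetP ST).
Qed.

Lemma NBU S T : NB (S :|: T) = NB S :|: NB T.
Proof.
apply/finset.setP => v; rewrite !inE; apply/existsP/orP.
  by case=> f /andP [] /setUP [] fS a; [left|right]; apply/existsP; exists f; rewrite fS.
by case=> /existsP [f /andP [fS a]]; exists f; rewrite inE fS ?orbT a.
Qed.

Definition solves (Fs : {set F}) (Ws : {set V}) (r : F -> R) (c : V -> R)
  (l : F -> V -> R) :=
  [/\ forall f v, 0 <= l f v,
      forall f v, l f v != 0 -> [&& f \in Fs, v \in Ws & adj f v],
      forall f, f \in Fs -> \sum_v l f v = r f &
      forall v, \sum_f l f v <= c v].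

Definition hall Fs Ws (r : F -> R) (c : V -> R) :=
  forall S, S \subset Fs -> \sum_(f in S) r f <= \sum_(v in NB S :&: Ws) c v.

Lemma solves_outF Fs Ws r c l f v : solves Fs Ws r c l -> f \notin Fs -> l f v = 0.
Proof.
case=> _ H _ _ nf; apply/eqP; apply: contraNT nf => /H /and3P [] //.
Qed.

Arguments solves_outF [Fs Ws r c l f v].

Lemma solves_outW Fs Ws r c l f v : solves Fs Ws r c l -> v \notin Ws -> l f v = 0.
Proof.
case=> _ H _ _ nf; apply/eqP; apply: contraNT nf => /H /and3P [] //.
Qed.

Arguments solves_outW [Fs Ws r c l f v].

Lemma sum_upd (I : finType) (A : {pred I}) a (g : I -> R) t :
  \sum_(i in A) (if i == a then g a - t else g i) =
  \sum_(i in A) g i - (if a \in A then t else 0).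
Proof.
case: ifP => aA.
  rewrite (bigD1 a) //= eqxx [in RHS](bigD1 a) //=.
  rewrite (eq_bigr g); first by lra.
  by move=> i /andP [_ /negbTE ->].
rewrite subr0; apply: eq_bigr => i iA; case: eqP => // ia.
by move: iA; rewrite ia aA.
Qed.

Lemma sum_drop0 (I : finType) (A : {set I}) a (g : I -> R) :
  g a = 0 -> \sum_(i in A :\ a) g i = \sum_(i in A) g i.
Proof.
move=> ga; case: (boolP (a \in A)) => aA.
  by rewrite [in RHS](big_setD1 a) //= ga add0r.
by apply: eq_bigl => i; rewrite !inE; case: eqP => // ->; rewrite (negbTE aA).
Qed.

Lemma solves_weak Fs Fs' Ws Ws' r c l :
  solves Fs' Ws' r c l -> Fs' \subset Fs -> Ws' \subset Ws ->
  (forall f, f \in Fs -> f \notin Fs' -> r f = 0) -> solves Fs Ws r c l.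
Proof.
move=> S sF sW r0; have [H1 H2 H3 H4] := S; split=> //.
  move=> f v /H2 /and3P [a b ->]; by rewrite (fintype.subsetP sF) ?(fintype.subsetP sW).
move=> f fF; case: (boolP (f \in Fs')) => fF'; first by apply: H3.
by rewrite r0 // big1 // => v _; apply: solves_outF S fF'.
Qed.


Lemma sumU (I : finType) (A B : {set I}) (g : I -> R) : [disjoint A & B] ->
  \sum_(i in A :|: B) g i = \sum_(i in A) g i + \sum_(i in B) g i.
Proof. by move=> d; rewrite -bigU //; apply: eq_bigl => i; rewrite !inE. Qed.

Definition gale_prop n := forall Fs Ws (r : F -> R) (c : V -> R),
  (#|Fs| + #|Ws| <= n)%N -> (forall f, 0 <= r f) -> (forall v, 0 <= c v) ->
  hall Fs Ws r c -> exists l, solves Fs Ws r c l.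

Lemma split_solve n Fs Ws r c S : gale_prop n ->
  (#|Fs| + #|Ws| <= n.+1)%N -> (forall f, 0 <= r f) -> (forall v, 0 <= c v) ->
  hall Fs Ws r c -> S \subset Fs -> S != finset.set0 -> S != Fs ->
  \sum_(f in S) r f = \sum_(v in NB S :&: Ws) c v ->
  exists l, solves Fs Ws r c l.
Proof.
move=> IH hn r0 c0 H SF Sn0 SnF tight.
have h1 : hall S (NB S :&: Ws) r c.
  move=> T TS; have := H T (fintype.subset_trans TS SF).
  by rewrite finset.setIA (finset.setIidPl (NB_sub TS)).
have h2 : hall (Fs :\: S) (Ws :\: NB S) r c.
  move=> T TS.
  have dTS : [disjoint T & S].
    rewrite -setI_eq0; apply/eqP/finset.setP => x; rewrite !inE.
    case xT: (x \in T) => //=; have := fintype.subsetP TS x xT.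
    by rewrite !inE => /andP [/negbTE ->].
  have TF : T :|: S \subset Fs.
    rewrite finset.subUset SF andbT; apply: fintype.subset_trans TS _; exact: subsetDl.
  have := H _ TF; rewrite sumU // NBU.
  have -> : (NB T :|: NB S) :&: Ws = (NB T :&: (Ws :\: NB S)) :|: (NB S :&: Ws).
    apply/finset.setP => x; rewrite !(finset.in_setI, finset.in_setU, finset.in_setD).
    by case: (x \in NB T); case: (x \in NB S); case: (x \in Ws).
  rewrite sumU; first by rewrite -tight; lra.
  rewrite -setI_eq0; apply/eqP/finset.setP => x; rewrite !(finset.in_setI, finset.in_setU, finset.in_setD, finset.in_set0).
  by case: (x \in NB T); case: (x \in NB S); case: (x \in Ws).
have cS : (#|S| < #|Fs|)%N by apply: proper_card; rewrite finset.properEneq SnF SF.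
have cS0 : (0 < #|S|)%N by rewrite card_gt0.
have cW1 : (#|NB S :&: Ws| <= #|Ws|)%N by apply: subset_leq_card; apply: subsetIr.
have cW2 : (#|Ws :\: NB S| <= #|Ws|)%N by apply: subset_leq_card; apply: subsetDl.
have cF2 : #|Fs :\: S| = (#|Fs| - #|S|)%N by rewrite cardsD (finset.setIidPr SF).
have [l1 s1] : exists l, solves S (NB S :&: Ws) r c l.
  by apply: IH => //; lia.
have [l2 s2] : exists l, solves (Fs :\: S) (Ws :\: NB S) r c l.
  by apply: IH => //; lia.
exists (fun f v => l1 f v + l2 f v).
have [a1 b1 d1 e1] := s1; have [a2 b2 d2 e2] := s2.
split.
- by move=> f v; apply: addr_ge0.
- move=> f v; case: (boolP (l1 f v == 0)) => [/eqP -> | /b1].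
    rewrite add0r => /b2 /and3P [].
    by rewrite !inE => /andP [_ ->] /andP [_ ->] ->.
  by case/and3P; rewrite !inE => fS /andP [_ ->] ->; rewrite (fintype.subsetP SF).
- move=> f fF; rewrite big_split /=.
  case: (boolP (f \in S)) => fS.
    rewrite d1 // big1 ?addr0 // => v _; apply: (solves_outF s2).
    by rewrite !inE fS.
  rewrite d2 ?inE ?fS ?fF // big1 ?add0r // => v _; exact: (solves_outF s1).
- move=> v; rewrite big_split /=.
  case: (boolP (v \in NB S)) => vS.
    rewrite [X in _ + X]big1 ?addr0 // => f _; apply: (solves_outW s2).
    by rewrite finset.in_setD vS.
  rewrite big1 ?add0r // => f _; apply: (solves_outW s1).
  by rewrite finset.in_setI (negbTE vS).
Qed.


Lemma solves0 Fs Ws r c : Fs = finset.set0 -> (forall v, 0 <= c v) ->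
  solves Fs Ws r c (fun _ _ => 0).
Proof.
move=> -> c0; split=> //.
- by move=> f v; rewrite eqxx.
- by move=> f; rewrite finset.in_set0.
- by move=> v; rewrite big1.
Qed.

Lemma bigmin_cases (I : finType) (P : pred I) (g : I -> R) x0 :
  let m := \big[Order.min/x0]_(i | P i) g i in
  m = x0 \/ exists2 i, P i & m = g i.
Proof.
apply: (big_rec (fun m => m = x0 \/ exists2 i, P i & m = g i)); first by left.
move=> i m Pi IHm; rewrite minEle; case: ifP => _; first by right; exists i.
exact: IHm.
Qed.

Lemma gale n : gale_prop n.
Proof.
elim: n => [|n IH] Fs Ws r c hn r0 c0 H.
  exists (fun _ _ => 0); apply: solves0 => //.
  by apply/eqP; rewrite -cards_eq0; lia.
case: (set_0Vmem Fs) => [F0|[f0 f0F]].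
  by exists (fun _ _ => 0); apply: solves0.
have cFs : #|Fs| = (#|Fs :\ f0|).+1 by rewrite (cardsD1 f0) f0F.
case: (boolP [exists v in Ws, adj f0 v]); last first.
  move=> nex.
  have rf0 : r f0 = 0.
    apply/eqP; rewrite eq_le r0 andbT.
    have := H [set f0]; rewrite big_set1 big1; first by apply; rewrite finset.sub1set.
    move=> v; rewrite finset.in_setI inE => /andP [/existsP [f /andP [] ]].
    rewrite inE => /eqP -> a vW; case/negP: nex; apply/existsP; exists v.
    by rewrite vW.
  have [l sl] : exists l, solves (Fs :\ f0) Ws r c l.
    apply: IH => //; first lia.
    move=> T TF; apply: H; apply: fintype.subset_trans TF _; exact: subD1set.
  exists l; apply: solves_weak sl _ _ _ => //; first exact: subD1set.
  by move=> f fF; rewrite !inE fF andbT negbK => /eqP ->.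
case/existsP => v0 /andP [v0W a0].
pose P := fun S : {set F} => (S \subset Fs :\ f0) && (v0 \in NB S).
pose slack := fun S : {set F} => \sum_(v in NB S :&: Ws) c v - \sum_(f in S) r f.
pose m := \big[Order.min/r f0]_(S | P S) slack S.
pose t := Order.min m (c v0).
have slack0 : forall S, S \subset Fs -> 0 <= slack S.
  by move=> S SF; rewrite /slack subr_ge0; apply: H.
have PF : forall S, P S -> S \subset Fs.
  move=> S /andP [SF _]; apply: fintype.subset_trans SF _; exact: subD1set.
have m0 : 0 <= m.
  apply: (big_rec (fun x => 0 <= x)) => // S x PS hx.
  by rewrite le_min hx andbT; apply: slack0; apply: PF.
have t0 : 0 <= t by rewrite le_min m0 c0.
have tr : t <= r f0 by rewrite ge_min bigmin_le_id.
have tc : t <= c v0 by rewrite ge_min lexx orbT.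
have tS : forall S, P S -> t <= slack S.
  by move=> S PS; rewrite ge_min (bigmin_le_cond _ _ PS).
pose r' := fun f => if f == f0 then r f0 - t else r f.
pose c' := fun v => if v == v0 then c v0 - t else c v.
have r'0 : forall f, 0 <= r' f.
  by move=> f; rewrite /r'; case: eqP => // _; rewrite subr_ge0.
have c'0 : forall v, 0 <= c' v.
  by move=> v; rewrite /c'; case: eqP => // _; rewrite subr_ge0.
have v0NB : forall S, f0 \in S -> v0 \in NB S :&: Ws.
  by move=> S f0S; rewrite finset.in_setI v0W andbT (in_NB f0S).
have H' : hall Fs Ws r' c'.
  move=> S SF; rewrite /r' /c' sum_upd [X in _ <= X]sum_upd.
  case: (boolP (f0 \in S)) => f0S.
    by rewrite v0NB //; have := H S SF; lra.
  case: ifP => vin; last by rewrite !subr0; apply: H.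
  have PS : P S.
    rewrite /P; move: vin; rewrite finset.in_setI => /andP [-> _]; rewrite andbT.
    apply/fintype.subsetP => x xS; rewrite !inE (fintype.subsetP SF) // andbT.
    by apply: contraNneq f0S => <-.
  by have := tS S PS; rewrite /slack subr0; lra.
have [l' sl'] : exists l', solves Fs Ws r' c' l'.
  case: (boolP (m <= c v0)) => mc; last first.
    have ct : t = c v0 by rewrite /t minEle (negbTE mc).
    have [l sl] : exists l, solves Fs (Ws :\ v0) r' c' l.
      apply: IH => //.
        by have := cardsD1 v0 Ws; rewrite v0W /=; lia.
      move=> S SF; rewrite finset.setIDA sum_drop0; first by apply: H'.
      by rewrite /c' eqxx ct subrr.
    exists l; apply: (solves_weak sl).
    - exact: fintype.subxx.
    - exact: subD1set.
    - by move=> f ->.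
  have mt : t = m by rewrite /t minEle mc.
  case: (bigmin_cases P slack (r f0)) => [mr|[S PS mS]].
    have [l sl] : exists l, solves (Fs :\ f0) Ws r' c' l.
      apply: IH => //; first lia.
      move=> T TF; apply: H'; apply: fintype.subset_trans TF _; exact: subD1set.
    exists l; apply: solves_weak sl _ _ _ => //; first exact: subD1set.
    move=> f fF; rewrite !inE fF andbT negbK => /eqP ->.
    by rewrite /r' eqxx mt /m mr subrr.
  have f0S : f0 \notin S.
    by case/andP: PS => /fintype.subsetP SF _; apply/negP => /SF; rewrite !inE eqxx.
  have v0S : v0 \in NB S by case/andP: PS.
  apply: (split_solve (S := S) IH) => //.
  - exact: PF.
  - apply/eqP => S0; move: v0S; rewrite inE => /existsP [f /andP []].
    by rewrite S0 finset.in_set0.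
  - by apply: contraNneq f0S => ->.
  - rewrite /r' /c' sum_upd [RHS]sum_upd (negbTE f0S).
    rewrite finset.in_setI v0S v0W /=.
    have : t = slack S by rewrite mt /m mS.
    rewrite /slack; lra.
exists (fun f v => l' f v + (if (f == f0) && (v == v0) then t else 0)).
have [a1 b1 d1 e1] := sl'.
split.
- by move=> f v; rewrite addr_ge0 //; case: ifP.
- move=> f v; case: (boolP (l' f v == 0)) => [/eqP -> | /b1 //].
  rewrite add0r; case: ifP => [/andP [/eqP -> /eqP ->] _|]; last by rewrite eqxx.
  by rewrite f0F v0W a0.
- move=> f fF; rewrite big_split /= d1 //.
  rewrite /r'; case: eqP => [->|nf] /=.
    rewrite (bigD1 v0) //= eqxx big1 ?addr0; first by rewrite subrK.
    by move=> v /negbTE ->.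
  by rewrite big1 ?addr0.
- move=> v; rewrite big_split /=.
  have := e1 v; rewrite /c'; case: eqP => [->|nv] /=.
    rewrite [X in _ + X <= c v0](bigD1 f0) //= eqxx /= [X in _ + (_ + X)]big1 ?addr0; first by lra.
    by move=> f /negbTE ->.
  rewrite [X in _ + X <= c v]big1 ?addr0 // => f _; by rewrite andbF.
Qed.

End Gale.
Section Main.
Variables (R : realType) (V F : finType).
Variables (rate : F -> R) (path : F -> {set V}) (cap : V -> R).
Hypothesis rate0 : forall f, 0 <= rate f.
Hypothesis cap0 : forall v, 0 <= cap v.

Definition adjp (f : F) (v : V) := v \in path f.
Definition Cut (U : {set V}) (S : {set F}) :=
  \sum_(f in ~: S) rate f + \sum_(v in NB adjp S :&: U) cap v.

Lemma sum_le_sub (I : finType) (P Q : pred I) (g : I -> R) :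
  (forall i, P i -> Q i) -> (forall i, Q i -> 0 <= g i) ->
  \sum_(i | P i) g i <= \sum_(i | Q i) g i.
Proof.
move=> PQ g0; rewrite [X in X <= _]big_mkcond [X in _ <= X]big_mkcond /=.
apply: ler_sum => i _; case Pi: (P i); first by rewrite (PQ i Pi).
by case Qi: (Q i) => //; apply: g0.
Qed.

Lemma weak U S lam : feasible3 rate cap U lam -> obj3 path U lam <= Cut U S.
Proof.
case=> l0 lc lU lr; rewrite /obj3 /Cut (bigID (mem S)) /= addrC.
apply: lerD.
  rewrite [X in _ <= X](eq_bigl (fun f => f \notin S)); last first.
    by move=> f; rewrite finset.in_setC.
  apply: ler_sum => f _; apply: le_trans (lr f).
  apply: sum_le_sub => // v; rewrite finset.in_setI => /andP [].
  done.
apply: (@le_trans _ _ (\sum_(f in S) \sum_(v in NB adjp S :&: U) lam f v)).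
  apply: ler_sum => f fS; apply: sum_le_sub => // v.
  rewrite !finset.in_setI => /andP [vp ->]; rewrite andbT.
  exact: (in_NB (adj := adjp) fS).
rewrite exchange_big /=; apply: ler_sum => v.
rewrite finset.in_setI => /andP [_ vU]; apply: le_trans (lc v vU).
by apply: sum_le_sub.
Qed.


Lemma sum_opt (h : option V -> R) : \sum_x h x = h None + \sum_v h (Some v).
Proof.
rewrite (bigD1 None) //=; congr (_ + _).
rewrite (eq_bigl (mem (Some @: [set: V]))); last first.
  move=> x; case: x => [v|] /=.
    by rewrite finset.imset_f ?finset.in_setT.
  by apply/esym/negbTE/finset.imsetP => -[v _].
rewrite big_imset /=; last by move=> x y _ _ [].
by apply: eq_bigl => v; rewrite finset.in_setT.
Qed.

Lemma sum_split (g : F -> R) (S : {set F}) :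
  \sum_f g f = \sum_(f in S) g f + \sum_(f in ~: S) g f.
Proof.
rewrite (bigID (mem S)) /=; congr (_ + _); apply: eq_bigl => f.
by rewrite finset.in_setC.
Qed.

Lemma Cut_min U : exists S, forall S', Cut U S <= Cut U S'.
Proof.
pose m := \big[Order.min/Cut U finset.set0]_(S : {set F}) Cut U S.
have : m = Cut U finset.set0 \/ exists2 S, true & m = Cut U S.
  exact: (bigmin_cases xpredT (Cut U)).
case=> [e|[S _ e]].
  by exists finset.set0 => S'; rewrite -e bigmin_le.
by exists S => S'; rewrite -e bigmin_le.
Qed.

Lemma strong U : exists S lam, feasible3 rate cap U lam /\ Cut U S <= obj3 path U lam.
Proof.
have [S0 S0min] := Cut_min U.
pose m := Cut U S0.
pose K := \sum_f rate f - m.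
have K0 : 0 <= K.
  rewrite /K subr_ge0; apply: le_trans (S0min finset.set0) _.
  rewrite /Cut [X in _ + X]big1 ?addr0.
    by apply: sum_le_sub.
  move=> v; rewrite finset.in_setI inE => /andP [/existsP [f /andP []]].
  by rewrite finset.in_set0.
pose adj' := fun f (x : option V) =>
  if x is Some v then (v \in path f) && (v \in U) else true.
pose c' := fun x : option V => if x is Some v then cap v else K.
have c'0 : forall x, 0 <= c' x by case.
have H : hall adj' [set: F] [set: option V] rate c'.
  move=> S _; case: (finset.set_0Vmem S) => [->|[f1 f1S]].
    by rewrite big_pred0 ?sumr_ge0 // => f; rewrite finset.in_set0.
  rewrite [X in _ <= X]big_mkcond sum_opt.
  have -> : None \in NB adj' S :&: [set: option V].
    by rewrite finset.in_setI finset.in_setT andbT (in_NB (adj := adj') f1S).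
  rewrite /=.
  rewrite (eq_bigr (fun v => if v \in NB adjp S :&: U then cap v else 0)); last first.
    move=> v _; congr (if _ then _ else _).
    rewrite !finset.in_setI finset.in_setT andbT !inE. rewrite /adj' /adjp /=.
    apply/existsP/andP.
      by case=> f /andP [fS /andP [a b]]; split=> //; apply/existsP; exists f; rewrite fS.
    by case=> /existsP [f /andP [fS a]] b; exists f; rewrite fS /= a.
  rewrite -big_mkcond /= /K.
  have := S0min S; rewrite /m /Cut (sum_split rate S); lra.
have [l [l0 lsup lrow lcol]] := gale (@leqnn (#|[set: F]| + #|[set: option V]|)) rate0 c'0 H.
exists S0, (fun f v => l f (Some v)); split.
  split.
  - by move=> f v; apply: l0.
  - by move=> v vU; apply: (lcol (Some v)).
  - move=> f v vU; apply/eqP; apply: contraNT vU => /lsup /and3P [_ _] /=.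
    by case/andP.
  - move=> f; rewrite -(lrow f (finset.in_setT f)) sum_opt.
    apply: le_trans (_ : \sum_v l f (Some v) <= _); first by apply: sum_le_sub.
    by rewrite lerDr.
rewrite /obj3.
have -> : \sum_f \sum_(v in path f :&: U) l f (Some v) = \sum_f (rate f - l f None).
  apply: eq_bigr => f _; rewrite -(lrow f (finset.in_setT f)) sum_opt addrAC subrr add0r.
  rewrite [RHS](bigID (fun v => v \in path f :&: U)) /= [X in _ + X]big1 ?addr0 //.
  move=> v; rewrite finset.in_setI => nv; apply/eqP; apply: contraNT nv.
  by move/lsup => /and3P [].
rewrite sumrB; have := lcol None; rewrite /c' /K /m; lra.
Qed.


Lemma R3_char U : exists S, R3 rate path cap U = Cut U S /\
  forall S', R3 rate path cap U <= Cut U S'.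
Proof.
have [S [lam [fl le]]] := strong U.
rewrite /R3.
match goal with |- context [sup ?X] => set E := X end.
have ub : forall S', ubound E (Cut U S').
  by move=> S' x [l [fl' ->]]; apply: weak.
have inE0 : E (obj3 path U lam) by exists lam.
have ne : (E !=set0)%classic by exists (obj3 path U lam).
have sle : forall S', sup E <= Cut U S' by move=> S'; apply: ge_sup.
have ge : obj3 path U lam <= sup E.
  by apply: (ub_le_sup (ex_intro _ (Cut U S) (ub S))).
exists S; split => //; apply/eqP; rewrite eq_le sle /=.
exact: le_trans le ge.
Qed.

Lemma sum_in (I : finType) (A : {set I}) (g : I -> R) :
  \sum_(i in A) g i = \sum_i (if i \in A then g i else 0).
Proof. exact: big_mkcond. Qed.

Lemma ind_ineq (x y z p u1 u2 : bool) (k : R) : 0 <= k ->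
  (z ==> x && y) -> (u1 ==> u2) -> (p ==> ~~ u2) ->
  (if z && (p || u2) then k else 0) + (if (x || y) && u1 then k else 0) <=
  (if x && (p || u1) then k else 0) + (if y && u2 then k else 0).
Proof.
by move=> k0; case: x; case: y; case: z; case: p; case: u1; case: u2 => //= _ _ _; lra.
Qed.

Lemma final : monotone_setfun (R3 rate path cap) /\ submodular (R3 rate path cap).
Proof.
split.
  move=> U1 U2 sub; have [S2 [e2 _]] := R3_char U2; have [? [_ le1]] := R3_char U1.
  rewrite e2; apply: le_trans (le1 S2) _; rewrite /Cut lerD2l.
  apply: sum_le_sub => // v; rewrite !finset.in_setI => /andP [-> /=].
  exact: (fintype.subsetP sub).
move=> U1 U2 v sub vn.
have [S [eS _]] := R3_char (v |: U1); have [T [eT _]] := R3_char U2.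
have [? [_ le3]] := R3_char (v |: U2); have [? [_ le4]] := R3_char U1.
have h3 := le3 (S :&: T); have h4 := le4 (S :|: T).
suff : Cut (v |: U2) (S :&: T) + Cut U1 (S :|: T) <= Cut (v |: U1) S + Cut U2 T.
  by rewrite eS eT in h3 h4 *; lra.
rewrite /Cut.
have rate_eq : \sum_(f in ~: (S :&: T)) rate f + \sum_(f in ~: (S :|: T)) rate f =
               \sum_(f in ~: S) rate f + \sum_(f in ~: T) rate f.
  rewrite !sum_in -!big_split; apply: eq_bigr => f _.
  rewrite !finset.in_setC !finset.in_setI !finset.in_setU.
  by case: (f \in S); case: (f \in T) => /=; rewrite ?addr0 ?add0r.
suff : \sum_(a in NB adjp (S :&: T) :&: (v |: U2)) cap a +
       \sum_(a in NB adjp (S :|: T) :&: U1) cap a <=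
       \sum_(a in NB adjp S :&: (v |: U1)) cap a + \sum_(a in NB adjp T :&: U2) cap a.
  by lra.
rewrite !sum_in -!big_split; apply: ler_sum => a _.
rewrite !finset.in_setI !finset.in_setU1 NBU finset.in_setU.
apply: ind_ineq => //.
- apply/implyP => az; rewrite !(fintype.subsetP (NB_sub _ _) a az) //.
    exact: finset.subsetIr.
  exact: finset.subsetIl.
- by apply/implyP => /(fintype.subsetP sub).
- by apply/implyP => /eqP ->.
Qed.

End Main.

Unset Implicit Arguments.

Theorem lemma2 (R : realType) (V F : finType)
  (rate : F -> R) (path : F -> {set V}) (cap : V -> R)
  (rate_pos : forall f, 0 < rate f) (cap_pos : forall v, 0 < cap v) :
  monotone_setfun (R3 rate path cap) /\ submodular (R3 rate path cap).
Proof.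
apply: final.
- by move=> f; apply: ltW.
- by move=> v; apply: ltW.
Qed.
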